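(* For all $U,U_0\in\mathbb{O}_+(p,r)$, $$\|\mathcal{A}(U)-\mathcal{A}(U_0)\|_F\le 2\|U-U_0\|_F .$$
   Context: Fix $1\le r\le p$. $\mathbb{O}(p,r)=\{U\in\mathbb{R}^{p\times r}:U^TU=I_r\}$ and $\mathbb{O}_+(p,r)=\{U=\begin{bmatrix}Q_1\\Q_2\end{bmatrix}\in\mathbb{O}(p,r): Q_1\in\mathbb{R}^{r\times r}\text{ symmetric positive definite}\}$. The inverse Cayley parameterization is the map $\mathcal{A}:\mathbb{O}_+(p,r)\to\mathbb{R}^{(p-r)\times r}$, $\mathcal{A}(U)=Q_2(I_r+Q_1)^{-1}$ for $U=\begin{bmatrix}Q_1\\Q_2\end{bmatrix}$. $\|\cdot\|_F$ is the Frobenius norm. *)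

(* Defs.v *)
From HB Require Import structures.
From mathcomp Require Import all_boot all_order all_algebra.
From mathcomp Require Import reals.
Set Implicit Arguments. Unset Strict Implicit. Unset Printing Implicit Defensive.
Import Order.TTheory GRing.Theory Num.Theory.
Local Open Scope ring_scope.

Definition spd (R : realType) (n : nat) (Q : 'M[R]_n) : Prop :=
  Q^T = Q /\ (forall x : 'cV[R]_n, x != 0 -> 0 < (x^T *m Q *m x) 0 0).

(* Stiefel manifold O(p,r), with p = r + q : U^T U = I_r. *)
Definition stiefel (R : realType) (r q : nat) (U : 'M[R]_(r + q, r)) : Prop :=
  U^T *m U = 1%:M.

Definition stiefel_plus (R : realType) (r q : nat) (U : 'M[R]_(r + q, r)) : Prop :=
  stiefel U /\ spd (usubmx U).

Definition cayleyA (R : realType) (r q : nat) (U : 'M[R]_(r + q, r)) : 'M[R]_(q, r) :=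
  dsubmx U *m invmx (1%:M + usubmx U).

Definition frob (R : realType) (m n : nat) (A : 'M[R]_(m, n)) : R :=
  Num.sqrt (\sum_(i < m) \sum_(j < n) A i j ^+ 2).

(* Main.v *)
Require Import Defs.
From mathcomp Require Import all_boot all_order all_algebra.
From mathcomp Require Import reals.
From mathcomp Require Import ring lra.
Import Order.TTheory GRing.Theory Num.Theory.
Set Implicit Arguments. Unset Strict Implicit.
Local Open Scope ring_scope.

Section S.
Variable R : realType.

Definition frob2 m n (A : 'M[R]_(m, n)) : R := \sum_(i < m) \sum_(j < n) A i j ^+ 2.
Definition nrm n (y : 'cV[R]_n) : R := (y^T *m y) 0 0.

Lemma nrmE n (y : 'cV[R]_n) : nrm y = \sum_i y i 0 ^+ 2.
Proof. rewrite /nrm mxE; apply: eq_bigr => i _; by rewrite mxE expr2. Qed.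

Lemma nrm_ge0 n (y : 'cV[R]_n) : 0 <= nrm y.
Proof. rewrite nrmE; apply: sumr_ge0 => i _; exact: sqr_ge0. Qed.

Lemma frob2_col m n (A : 'M[R]_(m, n)) : frob2 A = \sum_j nrm (col j A).
Proof.
rewrite /frob2 exchange_big; apply: eq_bigr => j _; rewrite nrmE.
by apply: eq_bigr => i _; rewrite mxE.
Qed.

Lemma frob2_tr m n (A : 'M[R]_(m, n)) : frob2 A^T = frob2 A.
Proof.
rewrite /frob2 exchange_big; apply: eq_bigr => j _; apply: eq_bigr => i _.
by rewrite mxE.
Qed.

Lemma frob2_ge0 m n (A : 'M[R]_(m, n)) : 0 <= frob2 A.
Proof. apply: sumr_ge0 => i _; apply: sumr_ge0 => j _; exact: sqr_ge0. Qed.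

Lemma frob2_mull m k n (C : 'M[R]_(m, k)) (Y : 'M[R]_(k, n)) :
  (forall y : 'cV_k, nrm (C *m y) <= nrm y) -> frob2 (C *m Y) <= frob2 Y.
Proof.
move=> H; rewrite !frob2_col; apply: ler_sum => j _.
by rewrite colE -mulmxA -colE.
Qed.

Lemma frob2_mulr m k n (Y : 'M[R]_(m, k)) (B : 'M[R]_(k, n)) :
  (forall y : 'cV_k, nrm (B^T *m y) <= nrm y) -> frob2 (Y *m B) <= frob2 Y.
Proof.
move=> H; rewrite -frob2_tr trmx_mul -(frob2_tr Y); exact: frob2_mull.
Qed.

Lemma frob2_add m n (A B : 'M[R]_(m, n)) :
  frob2 (A + B) <= 2 * frob2 A + 2 * frob2 B.
Proof.
rewrite /frob2 !mulr_sumr -big_split /=; apply: ler_sum => i _.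
rewrite !mulr_sumr -big_split /=; apply: ler_sum => j _.
rewrite mxE; move: (A i j) (B i j) => a b.
have := sqr_ge0 (a - b); nra.
Qed.

Lemma e00D (A B : 'M[R]_1) : (A + B) 0 0 = A 0 0 + B 0 0.
Proof. by rewrite mxE. Qed.

Lemma e00N (A : 'M[R]_1) : (- A) 0 0 = - A 0 0.
Proof. by rewrite mxE. Qed.

Lemma quad_ge0 n (Q : 'M[R]_n) : spd Q -> forall z : 'cV_n, 0 <= (z^T *m Q *m z) 0 0.
Proof.
move=> [_ HQ] z; have [->|nz] := eqVneq z 0.
  by rewrite mulmx0 mxE.
exact/ltW/HQ.
Qed.

Lemma nrm_1Q n (Q : 'M[R]_n) : spd Q -> forall z : 'cV_n,
  nrm ((1%:M + Q) *m z) = nrm z + (z^T *m Q *m z) 0 0 *+ 2 + nrm (Q *m z).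
Proof.
move=> [sQ _] z; rewrite /nrm !trmx_mul linearD /= trmx1 sQ.
rewrite !mulmxDl !mulmxDr !mul1mx !mulmx1 !mulmxA !mulmxDl !e00D mulr2n.
lra.
Qed.

Lemma nrm_le_1Q n (Q : 'M[R]_n) : spd Q -> forall z : 'cV_n,
  nrm z <= nrm ((1%:M + Q) *m z).
Proof.
move=> HQ z; rewrite nrm_1Q //; have := quad_ge0 HQ z; have := nrm_ge0 (Q *m z).
rewrite mulr2n; lra.
Qed.

Lemma unit_1Q n (Q : 'M[R]_n) : spd Q -> (1%:M + Q) \in unitmx.
Proof.
move=> HQ; rewrite unitmxE unitfE; apply/negP => /det0P [v nz hv].
have sM : (1%:M + Q)^T = 1%:M + Q by rewrite linearD /= trmx1 HQ.1.
have := HQ.2 v^T; rewrite trmx_eq0 => /(_ nz).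
have e : (v^T)^T *m (1%:M + Q) *m v^T = 0 by rewrite trmxK hv mul0mx.
move: e; rewrite mulmxDr mulmx1 mulmxDl => /(congr1 (fun M : 'M_1 => M 0 0)).
rewrite e00D (_ : (0 : 'M[R]_1) 0 0 = 0); last by rewrite mxE.
have := nrm_ge0 v^T; rewrite /nrm => h1 h2 h3.
by have := ltr_wpDl h1 h3; rewrite h2 ltxx.
Qed.


Lemma inv_contr n (Q : 'M[R]_n) : spd Q -> forall y : 'cV_n,
  nrm (invmx (1%:M + Q) *m y) <= nrm y.
Proof.
move=> HQ y; have := nrm_le_1Q HQ (invmx (1%:M + Q) *m y).
by rewrite mulmxA mulmxV ?mul1mx // unit_1Q.
Qed.

Lemma inv_sym n (Q : 'M[R]_n) : spd Q -> (invmx (1%:M + Q))^T = invmx (1%:M + Q).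
Proof. by move=> HQ; rewrite trmx_inv linearD /= trmx1 HQ.1. Qed.

Lemma dsub_contr r q (U : 'M[R]_(r + q, r)) : stiefel U -> forall z : 'cV_r,
  nrm (dsubmx U *m z) <= nrm z.
Proof.
move=> HU z.
have : (col_mx (usubmx U) (dsubmx U))^T *m col_mx (usubmx U) (dsubmx U) = 1%:M.
  by rewrite vsubmxK.
rewrite tr_col_mx mul_row_col => /(canRL (addKr _)) e.
have : nrm (dsubmx U *m z) = nrm z - nrm (usubmx U *m z).
  rewrite /nrm !trmx_mul (mulmxA (z^T *m _)) -(mulmxA z^T) e.
  rewrite mulmxDr mulmxDl mulmx1 mulmxN mulNmx e00D e00N addrC !mulmxA //.
move=> ->; have := nrm_ge0 (usubmx U *m z); lra.
Qed.

Lemma frob2N m n (A : 'M[R]_(m, n)) : frob2 (- A) = frob2 A.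
Proof.
by apply: eq_bigr => i _; apply: eq_bigr => j _; rewrite mxE sqrrN.
Qed.

Lemma frob2_split r q n (A : 'M[R]_(r + q, n)) :
  frob2 A = frob2 (usubmx A) + frob2 (dsubmx A).
Proof.
rewrite /frob2 big_split_ord /=; congr (_ + _); apply: eq_bigr => i _;
  apply: eq_bigr => j _; by rewrite mxE.
Qed.

End S.

Unset Implicit Arguments.
Theorem theorem2 (R : realType) (r q : nat) (hr : (1 <= r)%N)
  (U U0 : 'M[R]_(r + q, r)) :
  stiefel_plus U -> stiefel_plus U0 ->
  frob (cayleyA U - cayleyA U0) <= 2 * frob (U - U0).
Proof.
move=> [SU HQ] [SU0 HP].
set Q1 := usubmx U in HQ; set P1 := usubmx U0 in HP.
set Q2 := dsubmx U; set P2 := dsubmx U0.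
set B := invmx (1%:M + Q1); set Ci := invmx (1%:M + P1).
have uQ := unit_1Q HQ; have uP := unit_1Q HP.
have eA : cayleyA U - cayleyA U0 = (Q2 - P2) *m B + (P2 *m Ci) *m ((P1 - Q1) *m B).
  rewrite /cayleyA -/Q1 -/Q2 -/P1 -/P2 -/B -/Ci.
  have -> : P1 - Q1 = (1%:M + P1) - (1%:M + Q1).
    by rewrite opprD addrACA subrr add0r.
  rewrite !mulmxBl !mulmxBr mulmxV // mulmx1 -!mulmxA (mulmxA Ci) mulVmx // mul1mx.
  by rewrite addrA subrK.
have h1 : frob2 ((Q2 - P2) *m B) <= frob2 (Q2 - P2).
  by apply: frob2_mulr => y; rewrite inv_sym //; exact: inv_contr.
have h2 : frob2 ((P2 *m Ci) *m ((P1 - Q1) *m B)) <= frob2 (Q1 - P1).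
  apply: le_trans (_ : frob2 ((P1 - Q1) *m B) <= _).
    apply: frob2_mull => y; rewrite -mulmxA.
    exact: le_trans (dsub_contr SU0 _) (inv_contr HP y).
  rewrite [frob2 (Q1 - P1)](_ : _ = frob2 (P1 - Q1)); last by rewrite -frob2N opprB.
  apply: frob2_mulr => y; rewrite inv_sym //; exact: inv_contr.
have hU : frob2 (U - U0) = frob2 (Q1 - P1) + frob2 (Q2 - P2).
  rewrite frob2_split; congr (_ + _); congr frob2; apply/matrixP => i j; by rewrite !mxE.
have hA : frob2 (cayleyA U - cayleyA U0) <= 4 * frob2 (U - U0).
  rewrite eA; apply: le_trans (frob2_add _ _) _.
  have := frob2_ge0 (U - U0); have := frob2_ge0 (Q1 - P1); have := frob2_ge0 (Q2 - P2).
  rewrite hU => g1 g2 g3; lra.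
rewrite /frob -/(frob2 _) -/(frob2 (U - U0)).
apply: le_trans (ler_wsqrtr hA) _.
rewrite sqrtrM ?ler0n // (_ : 4 = 2 ^+ 2); last by rewrite -natrX.
by rewrite sqrtr_sqr ger0_norm.
Qed.
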